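(* Consider the following continuous-time Markov decision process (the bandit process of a self-shared ride-sharing service). Fix parameters $\lambda>0$ (arrival rate), $\mu>0$ (reneging rate), $R>0$ (reward for serving a pair), $\bar R>0$ (reward for a non-shared service) and $C\ge 0$ (reneging penalty), and write $X:=\bar R-C$. The state space is $\{0,1\}$ (number of waiting customers) and in each state an action $a\in\{0,1\}$ is chosen. Under action $a$: in state $0$ the process jumps to state $1$ at rate $a\lambda$ and earns reward rate $0$; in state $1$ the process jumps to state $0$ at total rate $a\lambda+\mu$ and earns reward rate $Ra\lambda+X\mu$ (a pair is served at rate $a\lambda$, earning $R$ per pair; the waiting customer reneges at rate $\mu$, earning $X$). For $\eta\in\mathbb{R}$, the $\eta$-process is the same process in which the reward rate in state $n$ under action $a$ is additionally reduced by $\eta a$. The Whittle index $\eta(n)$ of state $n\in\{0,1\}$ is a value of $\eta$ at which there exist two stationary deterministic policies maximizing the long-run average reward of the $\eta$-process, one taking action $1$ and the other taking action $0$ in state $n$; and the process is Whittle indexable if, for each state $n$, action $1$ in state $n$ is optimal for all $\eta<\eta(n)$ and action $0$ is optimal for all $\eta>\eta(n)$. Then the process is Whittle indexable and its Whittle indices are as follows. If $R<2X$, then $$\eta(0)=\lambda X,\qquad \eta(1)=\frac{\lambda}{2\lambda+\mu}\bigl((\lambda+\mu)R-\mu X\bigr);$$ otherwise (if $R\ge 2X$), $$\eta(0)=\eta(1)=\frac{\lambda}{2\lambda+\mu}\bigl(\lambda R+\mu X\bigr).$$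
   Context: This models a ride-sharing service in which two customers of the same type can share one vehicle: an arriving customer assigned to the service (action $1$) either waits (if nobody is waiting) or departs together with the single waiting customer (if one is waiting); a waiting customer becomes impatient after an exponential time of rate $\mu$ and leaves for a non-shared service, which yields reward $\bar R$ minus penalty $C$. Long-run average reward means $\lim_{T\to\infty}\frac1T\mathbb{E}\int_0^T(\text{reward rate})\,dt$. *)

(* Defs.v *)
From Stdlib Require Import Reals Arith Factorial.
From Coquelicot Require Import Coquelicot.
Open Scope R_scope.

(* States: false = 0 waiting customers, true = 1 waiting customer.
   Actions: false = action 0, true = action 1. *)
Definition b2r (b : bool) : R := if b then 1 else 0.

Definition policy := bool -> bool.

Definition gen (lam mu : R) (pol : policy) (i j : bool) : R :=
  let out := if i then b2r (pol true) * lam + mu else b2r (pol false) * lam in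
  if Bool.eqb i j then - out else out.

(* Reward rate of the eta-process in state i under policy [pol]
   (Rs = reward per served pair, X = Rbar - C). *)
Definition rew (lam mu Rs X eta : R) (pol : policy) (i : bool) : R :=
  if i then Rs * b2r (pol true) * lam + X * mu - eta * b2r (pol true)
  else 0 - eta * b2r (pol false).

Fixpoint genpow (lam mu : R) (pol : policy) (k : nat) (i j : bool) : R :=
  match k with
  | O => if Bool.eqb i j then 1 else 0
  | S k' => genpow lam mu pol k' i false * gen lam mu pol false j
          + genpow lam mu pol k' i true * gen lam mu pol true j
  end.

Definition trans_prob (lam mu : R) (pol : policy) (t : R) (i j : bool) : R :=
  Series (fun k => t ^ k / INR (fact k) * genpow lam mu pol k i j).

Definition avg_reward_is (lam mu Rs X eta : R) (pol : policy) (i : bool) (g : R) : Prop :=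
  is_lim
    (fun T => / T * RInt (fun t =>
        trans_prob lam mu pol t i false * rew lam mu Rs X eta pol false
      + trans_prob lam mu pol t i true * rew lam mu Rs X eta pol true) 0 T)
    p_infty (Finite g).

Definition optimal (lam mu Rs X eta : R) (pol : policy) : Prop :=
  forall i : bool, exists g : R,
    avg_reward_is lam mu Rs X eta pol i g /\
    forall (pol' : policy) (g' : R), avg_reward_is lam mu Rs X eta pol' i g' -> g' <= g.

Definition action_optimal (lam mu Rs X eta : R) (n a : bool) : Prop :=
  exists pol : policy, optimal lam mu Rs X eta pol /\ pol n = a.

Definition is_whittle_index (lam mu Rs X : R) (n : bool) (eta : R) : Prop :=
  action_optimal lam mu Rs X eta n true /\ action_optimal lam mu Rs X eta n false.

Definition whittle_indexable_with (lam mu Rs X : R) (idx : bool -> R) : Prop :=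
  forall n : bool,
    is_whittle_index lam mu Rs X n (idx n) /\
    (forall eta, eta < idx n -> action_optimal lam mu Rs X eta n true) /\
    (forall eta, idx n < eta -> action_optimal lam mu Rs X eta n false).

(* Main.v *)
Require Import Defs.
From Stdlib Require Import Reals Lra Arith Factorial.
From Coquelicot Require Import Coquelicot.
Open Scope R_scope.

Lemma exp_series x : is_series (fun k => x^k / INR (fact k)) (exp x).
Proof.
  generalize (is_exp_Reals x); unfold is_pseries; apply is_series_ext.
  intros n. rewrite pow_n_pow. reflexivity.
Qed.

Section S.
Variables (lam mu : R) (pol : policy).
Let a := b2r (pol false) * lam.
Let b := b2r (pol true) * lam + mu.
Let s := a + b.
Let Q := gen lam mu pol.

Lemma Q2 i j : Q i false * Q false j + Q i true * Q true j = - s * Q i j.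
Proof. unfold Q, s, a, b, gen; destruct i, j; simpl; ring. Qed.

Lemma genpowS k i j : genpow lam mu pol (S k) i j = (- s)^k * Q i j.
Proof.
  revert j; induction k; intros j.
  - simpl. destruct i; simpl; unfold Q; ring.
  - change (genpow lam mu pol (S (S k)) i j) with
      (genpow lam mu pol (S k) i false * gen lam mu pol false j
          + genpow lam mu pol (S k) i true * gen lam mu pol true j).
    rewrite !IHk. fold Q. simpl.
    transitivity ((-s)^k * (Q i false * Q false j + Q i true * Q true j)). ring.
    rewrite Q2. ring.
Qed.

Lemma trans_closed t i j : 0 < s ->
  trans_prob lam mu pol t i j =
  (if Bool.eqb i j then 1 else 0) + Q i j / s * (1 - exp (- s * t)).
Proof.
  intros Hs. unfold trans_prob. apply is_series_unique.
  apply is_series_decr_1.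
  apply (is_series_ext (fun k => scal (- (Q i j / s)) ((- s * t)^(S k) / INR (fact (S k))))).
  { intros n. cbv beta. rewrite genpowS. change (scal ?c ?x) with (c * x). rewrite Rpow_mult_distr. 
    assert (HF : INR (fact (S n)) <> 0) by apply INR_fact_neq_0. revert HF. generalize (INR (fact (S n))); intros F HF. simpl.
    field. split; auto; lra. }
  replace (plus _ _) with (scal (- (Q i j / s)) (exp (- s * t) - 1)).
  2:{ unfold plus, opp, scal; simpl; unfold mult, plus, opp; simpl. destruct (Bool.eqb i j); field; lra. }
  apply (@is_series_scal R_AbsRing R_NormedModule).
  apply (is_series_incr_1 (fun k => (- s * t)^k / INR (fact k))).
  replace (plus _ _) with (exp (- s * t)).
  apply exp_series.
  unfold plus; simpl. unfold plus; simpl. field.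
Qed.
End S.
Lemma rint_closed c d s T : 0 < s ->
  RInt (fun t => c + d * (1 - exp (- s * t))) 0 T = (c + d) * T + d / s * (exp (- s * T) - 1).
Proof.
  intros Hs. apply is_RInt_unique.
  set (F := fun t => (c + d) * t + d / s * exp (- s * t)).
  replace ((c + d) * T + d / s * (exp (- s * T) - 1)) with (minus (F T) (F 0)).
  2:{ unfold F, minus, plus, opp; simpl. replace (- s * 0) with 0 by ring. rewrite exp_0. field. lra. }
  apply (@is_RInt_derive R_CompleteNormedModule F (fun t => c + d * (1 - exp (- s * t)))).
  - intros x _. unfold F. auto_derive; auto. field. lra.
  - intros x _. apply (@ex_derive_continuous R_AbsRing R_NormedModule). auto_derive; auto.
Qed.

Lemma lim_closed c d s : 0 < s ->
  is_lim (fun T => / T * RInt (fun t => c + d * (1 - exp (- s * t))) 0 T) p_infty (c + d).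
Proof.
  intros Hs. apply is_lim_spec. intros eps. simpl.
  exists (Rmax 1 (Rabs d / (s * eps))). intros T HT.
  assert (HT1 : 1 < T) by (eapply Rle_lt_trans; [apply Rmax_l | exact HT]).
  assert (HT2 : Rabs d / (s * eps) < T) by (eapply Rle_lt_trans; [apply Rmax_r | exact HT]).
  rewrite rint_closed by lra.
  pose proof (cond_pos eps) as He.
  assert (Hse : 0 < s * eps) by nra.
  assert (Hd : Rabs d < s * eps * T).
  { apply (Rmult_lt_compat_l (s * eps)) in HT2; auto.
    replace (s * eps * (Rabs d / (s * eps))) with (Rabs d) in HT2 by (field; lra). lra. }
  set (u := 1 - exp (- s * T)).
  assert (Hu0 : 0 <= u).
  { unfold u. assert (exp (- s * T) <= 1). { rewrite <- exp_0. left. apply exp_increasing. nra. } lra. }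
  assert (Hu1 : u <= 1) by (unfold u; pose proof (exp_pos (- s * T)); lra).
  replace (exp (- s * T) - 1) with (- u) by (unfold u; ring).
  replace (/ T * ((c + d) * T + d / s * - u) - (c + d)) with (- (d * u) / (s * T)) by (field; lra).
  assert (Hdu : Rabs (d * u) < s * eps * T).
  { rewrite Rabs_mult, (Rabs_right u) by lra.
    pose proof (Rabs_pos d). nra. }
  rewrite Rabs_div by nra. rewrite Rabs_Ropp, (Rabs_right (s * T)) by nra.
  apply (Rmult_lt_reg_r (s * T)). nra.
  replace (Rabs (d * u) / (s * T) * (s * T)) with (Rabs (d * u)) by (field; nra).
  nra.
Qed.

Definition avgb lam mu Rs X eta (x0 x1 : bool) : R :=
  ((b2r x1 * lam + mu) * (0 - eta * b2r x0)
   + b2r x0 * lam * (Rs * b2r x1 * lam + X * mu - eta * b2r x1))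
  / (b2r x0 * lam + (b2r x1 * lam + mu)).

Lemma b2r_ge0 x : 0 <= b2r x.
Proof. destruct x; simpl; lra. Qed.

Lemma avg_iff lam mu Rs X eta pol i g : 0 < lam -> 0 < mu ->
  (avg_reward_is lam mu Rs X eta pol i g <-> g = avgb lam mu Rs X eta (pol false) (pol true)).
Proof.
  intros Hl Hm.
  set (s := b2r (pol false) * lam + (b2r (pol true) * lam + mu)).
  assert (Hs : 0 < s).
  { unfold s. pose proof (b2r_ge0 (pol false)); pose proof (b2r_ge0 (pol true)). nra. }
  set (r0 := rew lam mu Rs X eta pol false).
  set (r1 := rew lam mu Rs X eta pol true).
  set (c := if i then r1 else r0).
  set (d := (gen lam mu pol i false * r0 + gen lam mu pol i true * r1) / s).
  assert (Hlim : is_lim (fun T => / T * RInt (fun t =>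
        trans_prob lam mu pol t i false * r0 + trans_prob lam mu pol t i true * r1) 0 T)
        p_infty (c + d)).
  { eapply is_lim_ext; [| apply (lim_closed c d s Hs)].
    intros T. simpl. f_equal. apply RInt_ext. intros t _.
    rewrite !trans_closed by exact Hs. fold s.
    unfold c, d. match goal with |- @eq _ ?x ?y => change (@eq R x y) end. destruct i; simpl; field; lra. }
  assert (Heq : c + d = avgb lam mu Rs X eta (pol false) (pol true)).
  { unfold c, d, r0, r1, avgb, rew, gen. fold s. unfold s in *. destruct i; simpl; field; lra. }
  unfold avg_reward_is. fold r0 r1. split.
  - intros H. apply is_lim_unique in H. apply is_lim_unique in Hlim.
    rewrite H in Hlim. injection Hlim. intros ->. auto.
  - intros ->. rewrite <- Heq. exact Hlim.
Qed.

Definition best lam mu Rs X eta x0 x1 :=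
  forall y0 y1, avgb lam mu Rs X eta y0 y1 <= avgb lam mu Rs X eta x0 x1.

Definition a10 lam mu (Rs X eta : R) := mu * (lam * X - eta) * (2 * lam + mu).
Definition a11 lam mu Rs X eta := (lam * (lam * Rs + mu * X) - (2 * lam + mu) * eta) * (lam + mu).

Section V.
Variables (lam mu Rs X eta : R).
Hypotheses (Hl : 0 < lam) (Hm : 0 < mu).
Let PD := (lam + mu) * (2 * lam + mu).
Lemma PD_pos : 0 < PD.
Proof. unfold PD. nra. Qed.

Lemma v00 : avgb lam mu Rs X eta false false = 0 / PD.
Proof. unfold avgb; simpl. pose proof PD_pos. field. lra. Qed.
Lemma v01 : avgb lam mu Rs X eta false true = 0 / PD.
Proof. unfold avgb; simpl. pose proof PD_pos. field. lra. Qed.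
Lemma v10 : avgb lam mu Rs X eta true false = a10 lam mu Rs X eta / PD.
Proof. unfold avgb, a10, PD; simpl. field. lra. Qed.
Lemma v11 : avgb lam mu Rs X eta true true = a11 lam mu Rs X eta / PD.
Proof. unfold avgb, a11, PD; simpl. field. lra. Qed.

Lemma best_of x0 x1 v :
  avgb lam mu Rs X eta x0 x1 = v / PD -> 0 <= v ->
  a10 lam mu Rs X eta <= v -> a11 lam mu Rs X eta <= v ->
  best lam mu Rs X eta x0 x1.
Proof.
  intros Hv H0 H1 H2 y0 y1. rewrite Hv. pose proof PD_pos.
  destruct y0, y1; [rewrite v11|rewrite v10|rewrite v01|rewrite v00];
  unfold Rdiv; apply Rmult_le_compat_r; try (left; apply Rinv_0_lt_compat; auto); lra.
Qed.
End V.

Lemma act_of lam mu Rs X eta (n a x0 x1 : bool) : 0 < lam -> 0 < mu ->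
  best lam mu Rs X eta x0 x1 -> (if n then x1 else x0) = a ->
  action_optimal lam mu Rs X eta n a.
Proof.
  intros Hl Hm Hb Hn. exists (fun m : bool => if m then x1 else x0). split; auto.
  intros i. exists (avgb lam mu Rs X eta x0 x1). split.
  - apply avg_iff; auto.
  - intros pol' g' H. apply avg_iff in H; auto. subst. apply Hb.
Qed.

Ltac use x0 x1 v :=
  eapply (act_of _ _ _ _ _ _ _ x0 x1); [assumption|assumption|
    eapply (best_of _ _ _ _ _ _ _ x0 x1 v);
      [first [apply v00|apply v01|apply v10|apply v11]; assumption
      | unfold a10, a11 | unfold a10, a11 | unfold a10, a11] | reflexivity].

Lemma conv_lt lam D Y eta : 0 < D -> eta < lam / D * Y -> eta * D < lam * Y.
Proof. intros HD H. apply (Rmult_lt_compat_r D) in H; auto.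
  replace (lam / D * Y * D) with (lam * Y) in H by (field; lra). exact H. Qed.
Lemma conv_gt lam D Y eta : 0 < D -> lam / D * Y < eta -> lam * Y < eta * D.
Proof. intros HD H. apply (Rmult_lt_compat_r D) in H; auto.
  replace (lam / D * Y * D) with (lam * Y) in H by (field; lra). exact H. Qed.

Theorem proposition1 (lam mu Rs Rbar C : R) :
  0 < lam -> 0 < mu -> 0 < Rs -> 0 < Rbar -> 0 <= C ->
  (Rs < 2 * (Rbar - C) ->
     whittle_indexable_with lam mu Rs (Rbar - C)
       (fun n => if n
                 then lam / (2 * lam + mu) * ((lam + mu) * Rs - mu * (Rbar - C))
                 else lam * (Rbar - C))) /\
  (2 * (Rbar - C) <= Rs ->
     whittle_indexable_with lam mu Rs (Rbar - C)
       (fun _ => lam / (2 * lam + mu) * (lam * Rs + mu * (Rbar - C)))).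
Proof.
  intros Hl Hm HRs _ _. generalize (Rbar - C); intros X.
  assert (HD : 0 < 2 * lam + mu) by lra.
  assert (HP : 0 < lam + mu) by lra.
  assert (q1 : 0 < mu * (2 * lam + mu)) by nra.
  assert (q2 : 0 < (lam + mu) * lam * mu) by (apply Rmult_lt_0_compat; nra).
  assert (q4 : 0 < lam * lam * (lam + mu)) by (apply Rmult_lt_0_compat; nra).
  assert (q6 : 0 < lam * (lam + mu)) by nra.
  assert (q8 : 0 < lam * lam * mu) by (apply Rmult_lt_0_compat; nra).
  assert (q9 : 0 < (lam + mu) * (2 * lam + mu)) by nra.
  split; intros HR n; destruct n; simpl.
  - set (e := lam / (2 * lam + mu) * ((lam + mu) * Rs - mu * X)).
    assert (He : e * (2 * lam + mu) = lam * ((lam + mu) * Rs - mu * X)) by (unfold e; field; lra).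
    split; [split|split].
    + use true true (a11 lam mu Rs X e); nra.
    + use true false (a10 lam mu Rs X e); nra.
    + intros eta Heta. apply conv_lt in Heta; auto.
      destruct (Rle_lt_dec 0 (a11 lam mu Rs X eta)).
      * use true true (a11 lam mu Rs X eta); unfold a11 in *; nra.
      * use false true 0; unfold a11 in *; nra.
    + intros eta Heta. apply conv_gt in Heta; auto.
      destruct (Rle_lt_dec 0 (a10 lam mu Rs X eta)).
      * use true false (a10 lam mu Rs X eta); unfold a10 in *; nra.
      * use false false 0; unfold a10 in *; nra.
  - split; [split|split].
    + use true false (a10 lam mu Rs X (lam * X)); nra.
    + use false false 0; nra.
    + intros eta Heta.
      destruct (Rle_lt_dec (a11 lam mu Rs X eta) (a10 lam mu Rs X eta)).
      * use true false (a10 lam mu Rs X eta); unfold a10, a11 in *; nra.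
      * use true true (a11 lam mu Rs X eta); unfold a10, a11 in *; nra.
    + intros eta Heta. use false false 0; nra.
  - set (e := lam / (2 * lam + mu) * (lam * Rs + mu * X)).
    assert (He : e * (2 * lam + mu) = lam * (lam * Rs + mu * X)) by (unfold e; field; lra).
    split; [split|split].
    + use true true (a11 lam mu Rs X e); nra.
    + use false false 0; nra.
    + intros eta Heta. apply conv_lt in Heta; auto. use true true (a11 lam mu Rs X eta); nra.
    + intros eta Heta. apply conv_gt in Heta; auto. use false false 0; nra.
  - set (e := lam / (2 * lam + mu) * (lam * Rs + mu * X)).
    assert (He : e * (2 * lam + mu) = lam * (lam * Rs + mu * X)) by (unfold e; field; lra).
    split; [split|split].
    + use true true (a11 lam mu Rs X e); nra.
    + use false false 0; nra.
    + intros eta Heta. apply conv_lt in Heta; auto. use true true (a11 lam mu Rs X eta); nra.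
    + intros eta Heta. apply conv_gt in Heta; auto. use false false 0; nra.
Unshelve. all: assumption.
Qed.
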